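(* Let $\phi$ be a reduced Boolean formula in the input variables $x_1,\dots,x_n$ and let $Q \subseteq [0,1]^n$ be a convex set. Then $\phi(Q)$ is a convex subset of $Q$. Moreover, $\phi(Q)$ contains every point $x \in \{0,1\}^n$ such that $x \in Q$ and $\phi(x) = 1$; that is, $Q \cap \phi^{-1}(1) \subseteq \phi(Q)$.
   Context: Boolean formulas are built from input variables $x_1,\dots,x_n$ using $\wedge$, $\vee$, $\neg$; a formula is interpreted as a function $\{0,1\}^n \to \{0,1\}$ (with $x_i=1$ meaning true). A formula is reduced if negations are applied only to input variables. Every reduced formula is either a literal $x_i$ or $\neg x_i$, or a conjunction or disjunction of two reduced formulas. For a reduced formula $\phi$ and a convex set $Q \subseteq [0,1]^n$, the set $\phi(Q)\subseteq \mathbb{R}^n$ is defined recursively: a non-negated variable $x_i$ is replaced by $\{x \in Q : x_i = 1\}$; a negated variable $\neg x_i$ is replaced by $\{x \in Q : x_i = 0\}$; a conjunction of two subformulas is replaced by the intersection of the corresponding sets; a disjunction of two subformulas is replaced by the convex hull of the union of the corresponding sets. *)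

(* Defs.v *)
From mathcomp Require Import all_boot all_order all_algebra.
From mathcomp Require Import all_classical all_reals.
Set Implicit Arguments. Unset Strict Implicit. Unset Printing Implicit Defensive.
Import Order.TTheory GRing.Theory Num.Theory.
Local Open Scope ring_scope.
Local Open Scope classical_set_scope.

(* Reduced Boolean formulas over variables x_i, i : 'I_n:
   negations only on input variables. *)
Inductive rformula (n : nat) : Type :=
  | RVar : 'I_n -> rformula n
  | RNVar : 'I_n -> rformula n
  | RAnd : rformula n -> rformula n -> rformula n
  | ROr : rformula n -> rformula n -> rformula n.

Fixpoint reval n (phi : rformula n) (b : 'I_n -> bool) : bool :=
  match phi with
  | RVar i => b i
  | RNVar i => ~~ b i
  | RAnd p q => reval p b && reval q b
  | ROr p q => reval p b || reval q b
  end.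

Definition convex_set (R : realType) n (S : set 'rV[R]_n) : Prop :=
  forall x y t, S x -> S y -> 0 <= t -> t <= 1 ->
    S ((1 - t) *: x + t *: y).

Definition conv_hull (R : realType) n (A : set 'rV[R]_n) : set 'rV[R]_n :=
  [set x | forall C, convex_set C -> A `<=` C -> C x].

Definition unit_cube (R : realType) n : set 'rV[R]_n :=
  [set x | forall i, 0 <= x ord0 i <= 1].

Fixpoint formula_set (R : realType) n (phi : rformula n) (Q : set 'rV[R]_n)
  : set 'rV[R]_n :=
  match phi with
  | RVar i => [set x | Q x /\ x ord0 i = 1]
  | RNVar i => [set x | Q x /\ x ord0 i = 0]
  | RAnd p q => formula_set p Q `&` formula_set q Q
  | ROr p q => conv_hull (formula_set p Q `|` formula_set q Q)
  end.

Definition bool_pt (R : realType) n (b : 'I_n -> bool) : 'rV[R]_n :=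
  \row_i (b i)%:R.

(* Main.v *)
Require Import Defs.
From mathcomp Require Import all_boot all_order all_algebra.
From mathcomp Require Import all_classical all_reals.
Import Order.TTheory GRing.Theory Num.Theory.
Local Open Scope ring_scope.
Local Open Scope classical_set_scope.

Lemma conv_hull_convex (R : realType) n (A : set 'rV[R]_n) :
  convex_set (conv_hull A).
Proof.
move=> x y t hx hy t0 t1 D cD AD; exact: cD (hx D cD AD) (hy D cD AD) t0 t1.
Qed.

Theorem proposition4p1 (R : realType) (n : nat) (phi : rformula n)
  (Q : set 'rV[R]_n) :
  Q `<=` @unit_cube R n -> convex_set Q ->
  [/\ convex_set (formula_set phi Q), formula_set phi Q `<=` Q &
      forall b : 'I_n -> bool, Q (@bool_pt R n b) -> reval phi b ->
        formula_set phi Q (@bool_pt R n b)].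
Proof.
move=> _ cQ; elim: phi => [i|i|p [cp sp bp] q [cq sq bq]|p [cp sp bp] q [cq sq bq]] /=.
- split.
  + move=> x y t [Qx xi] [Qy yi] t0 t1; split; first exact: cQ.
    by rewrite !mxE xi yi !mulr1 subrK.
  + by move=> x [].
  + by move=> b Qb bi; split => //; rewrite mxE bi.
- split.
  + move=> x y t [Qx xi] [Qy yi] t0 t1; split; first exact: cQ.
    by rewrite !mxE xi yi !mulr0 addr0.
  + by move=> x [].
  + by move=> b Qb bi; split => //; rewrite mxE; move: bi; case: (b i).
- split.
  + move=> x y t [px qx] [py qy] t0 t1; split; [exact: cp | exact: cq].
  + by move=> x [/sp].
  + by move=> b Qb /andP[pb qb]; split; [exact: bp | exact: bq].
- split.
  + exact: conv_hull_convex.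
  + move=> x hx; apply: hx => // y [/sp|/sq] //.
  + move=> b Qb /orP[pb|qb] D _ AD; apply: AD; [left; exact: bp | right; exact: bq].
Qed.
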